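(* Let $q^*$ be a fixed point of $S$ achieving the rate-distortion-perception function, and let $$M_{ij}=q^*(i)\sum_xp(x)\frac{A(x,i)A(x,j)}{\big(\sum_kq^*(k)A(x,k)\big)^2}.$$ Then every eigenvalue $\lambda$ of $M$ satisfies $\lambda\le1$.
   Context: Finite alphabets $\mathcal X=\hat{\mathcal X}$, source distribution $p$, distortion $d\ge0$, and multipliers $s_1,s_2\ge0$. $f:(0,\infty)\to\mathbb R$ is convex, twice differentiable, with $f(1)=0$, and $D_f(p\|q)=\sum_xq(x)f(p(x)/q(x))$. $S$ is the implicitly defined map $$S[q](i)=q(i)\sum_xp(x)\frac{A_q(x,i)}{\sum_kq(k)A_q(x,k)},\qquad A_q(x,i)=\exp\{-s_1d(x,i)-s_2[f(p(i)/S[q](i))-\tfrac{p(i)}{S[q](i)}f'(p(i)/S[q](i))]\},$$ and $A=A_{q^*}$. *)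

(* Defs.v *)
From mathcomp Require Import all_boot all_order all_algebra.
From mathcomp Require Import all_classical all_reals all_analysis.
From mathcomp Require Export complex.
Import GRing.Theory Num.Theory.

Set Implicit Arguments.
Unset Strict Implicit.
Unset Printing Implicit Defensive.

Local Open Scope ring_scope.

Section RDP.
Variables (R : realType) (n : nat).

(* The common finite alphabet X = Xhat is 'I_n. *)

Definition is_prob (v : 'I_n -> R) : Prop :=
  (forall i, 0 <= v i) /\ \sum_(i < n) v i = 1.

Definition convex_pos (f : R -> R) : Prop :=
  forall x y t : R, 0 < x -> 0 < y -> 0 <= t -> t <= 1 ->
    f (t * x + (1 - t) * y) <= t * f x + (1 - t) * f y.

Definition twice_derivable_pos (f : R -> R) : Prop :=
  forall x : R, 0 < x -> derivable f x 1 /\ derivable (derive1 f) x 1.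

Definition fdiv (f : R -> R) (p q : 'I_n -> R) : R :=
  \sum_(x < n) q x * f (p x / q x).

(* A_q(x,i) where the output distribution plugged in is r (r = S[q]).
   At a fixed point S[q] = q, so A = A_{q*} is obtained with r = q*. *)
Definition Afun (p : 'I_n -> R) (d : 'I_n -> 'I_n -> R) (f : R -> R)
    (s1 s2 : R) (r : 'I_n -> R) (x i : 'I_n) : R :=
  expR (- s1 * d x i
        - s2 * (f (p i / r i) - p i / r i * (derive1 f) (p i / r i))).

(* q is a fixed point of S: S[q] = q, i.e. the implicit defining equation
   of S holds with S[q] replaced by q. *)
Definition is_fixed_point_S (p : 'I_n -> R) (d : 'I_n -> 'I_n -> R)
    (f : R -> R) (s1 s2 : R) (q : 'I_n -> R) : Prop :=
  forall i : 'I_n,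
    q i = q i * \sum_(x < n) p x * Afun p d f s1 s2 q x i
                 / \sum_(k < n) q k * Afun p d f s1 s2 q x k.

Definition Mmat (p : 'I_n -> R) (d : 'I_n -> 'I_n -> R) (f : R -> R)
    (s1 s2 : R) (q : 'I_n -> R) : 'M[R]_n :=
  \matrix_(i < n, j < n)
    (q i * \sum_(x < n) p x * Afun p d f s1 s2 q x i * Afun p d f s1 s2 q x j
             / (\sum_(k < n) q k * Afun p d f s1 s2 q x k) ^+ 2).

Definition is_channel (W : 'I_n -> 'I_n -> R) : Prop :=
  forall x, is_prob (W x).

Definition out_dist (p : 'I_n -> R) (W : 'I_n -> 'I_n -> R) (y : 'I_n) : R :=
  \sum_(x < n) p x * W x y.

(* mutual information I(X; Xhat) (natural log; 0 ln 0 = 0 since the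
   factor W x y = 0 kills the term) *)
Definition mutual_info (p : 'I_n -> R) (W : 'I_n -> 'I_n -> R) : R :=
  \sum_(x < n) \sum_(y < n)
     p x * W x y * ln (W x y / out_dist p W y).

Definition exp_distortion (p : 'I_n -> R) (W : 'I_n -> 'I_n -> R)
    (d : 'I_n -> 'I_n -> R) : R :=
  \sum_(x < n) \sum_(y < n) p x * W x y * d x y.

Definition rdp_lagrangian (p : 'I_n -> R) (d : 'I_n -> 'I_n -> R)
    (f : R -> R) (s1 s2 : R) (W : 'I_n -> 'I_n -> R) : R :=
  mutual_info p W + s1 * exp_distortion p W d
  + s2 * fdiv f p (out_dist p W).

(* q achieves the RDP function (at multipliers s1, s2): q is the output
   distribution of an optimal test channel, i.e. one minimizing the
   Lagrangian over all test channels (whose output distribution is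
   positive, so that D_f(p || q_W) is defined). *)
Definition achieves_rdp (p : 'I_n -> R) (d : 'I_n -> 'I_n -> R)
    (f : R -> R) (s1 s2 : R) (q : 'I_n -> R) : Prop :=
  exists Wstar : 'I_n -> 'I_n -> R,
    [/\ is_channel Wstar,
        (forall y, out_dist p Wstar y = q y) &
        (forall W, is_channel W -> (forall y, 0 < out_dist p W y) ->
           rdp_lagrangian p d f s1 s2 Wstar <= rdp_lagrangian p d f s1 s2 W)].

End RDP.

(* Main.v *)
Require Import Defs.
From mathcomp Require Import all_boot all_order all_algebra.
From mathcomp Require Import all_classical all_reals all_analysis.
From mathcomp Require Import complex.
From mathcomp Require Import ring lra.
Import Order.TTheory GRing.Theory Num.Theory.
Local Open Scope ring_scope.

Local Notation "x %:C" := (real_complex _ x) : ring_scope.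

Lemma conjR (R : realType) (r : R) : (r%:C)^* = r%:C.
Proof. by rewrite conj_Creal // complex_real. Qed.

Lemma var_id (R : realType) (n : nat) (pi : 'I_n -> R) (V : 'I_n -> R[i]) :
  \sum_j pi j = 1 ->
  let c := \sum_j (pi j)%:C * V j in
  \sum_j (pi j)%:C * ((V j - c) * (V j - c)^*) =
  \sum_j (pi j)%:C * (V j * (V j)^*) - c * c^*.
Proof.
move=> s1 c.
have h j : (pi j)%:C * ((V j - c) * (V j - c)^*) =
   (pi j)%:C * (V j * (V j)^*) - ((pi j)%:C * V j) * c^*
   - c * ((pi j)%:C * (V j)^*) + c * c^* * (pi j)%:C.
  by rewrite rmorphB /=; ring.
rewrite (eq_bigr _ (fun j _ => h j)) big_split /= !sumrB.
rewrite -!mulr_suml -!mulr_sumr -/c.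
have -> : \sum_i (pi i)%:C * (V i)^* = c^*.
  by rewrite /c rmorph_sum; apply: eq_bigr => j _; rewrite rmorphM /= conjR.
have -> : \sum_i (pi i)%:C = 1 by rewrite -rmorph_sum /= s1.
ring.
Qed.

Lemma key (R : realType) (n : nat) (p q : 'I_n -> R) (a : 'I_n -> 'I_n -> R)
  (v : 'rV[R[i]]_n) (lambda : R[i]) :
  (forall x, 0 <= p x) -> (forall i, 0 < q i) -> (forall x i, 0 <= a x i) ->
  (forall x, \sum_j q j * a x j = 1) ->
  (forall j, \sum_x p x * a x j = 1) ->
  v *m (\matrix_(i < n, j < n) (q i * \sum_x p x * a x i * a x j)%:C) = lambda *: v ->
  v != 0 -> lambda <= 1.
Proof.
move=> p0 q0 a0 sq sp ev vn0.
set V := fun j => v 0 j.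
set c := fun x => \sum_i (q i * a x i)%:C * V i.
have E1 j : \sum_x (p x * a x j)%:C * c x = lambda * V j.
  move/rowP: (ev) => /(_ j); rewrite !mxE => <-.
  rewrite /c; under eq_bigr => x _ do rewrite mulr_sumr.
  rewrite exchange_big /=; apply: eq_bigr => i _.
  rewrite mxE rmorphM rmorph_sum /= mulr_sumr mulr_sumr. apply: eq_bigr => x _.
  rewrite !rmorphM /=; rewrite /V; ring.
set S := \sum_j (q j)%:C * (V j * (V j)^*).
set T := \sum_x (p x)%:C * (c x * (c x)^*).
have E2 : lambda * S = T.
  rewrite /S mulr_sumr.
  transitivity (\sum_j (q j)%:C * ((lambda * V j) * (V j)^*)).
    by apply: eq_bigr => j _; ring.
  under eq_bigr => j _ do rewrite -E1 mulr_suml mulr_sumr.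
  rewrite exchange_big /=; apply: eq_bigr => x _.
  rewrite /c rmorph_sum /= !mulr_sumr; apply: eq_bigr => j _.
  rewrite [X in _ = _ * (_ * X)]rmorphM /= conjR !rmorphM /=; ring.
have E3 : S - T = \sum_x (p x)%:C * \sum_j (q j * a x j)%:C * ((V j - c x) * (V j - c x)^*).
  under eq_bigr => x _ do rewrite (@var_id _ _ (fun j => q j * a x j) V (sq x)).
  rewrite -/c.
  under eq_bigr => x _ do rewrite mulrBr.
  rewrite sumrB /T; congr (_ - _).
  rewrite /S.
  under [in RHS]eq_bigr => x _ do rewrite mulr_sumr.
  rewrite exchange_big /=; apply: eq_bigr => j _.
  transitivity ((q j)%:C * (V j * (V j)^*) * (\sum_x p x * a x j)%:C).
    by rewrite sp mulr1.
  rewrite rmorph_sum mulr_sumr /=; apply: eq_bigr => x _; rewrite !rmorphM /=; ring.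
have STge0 : 0 <= S - T.
  rewrite E3; apply: sumr_ge0 => x _; apply: mulr_ge0; first by rewrite ler0c.
  apply: sumr_ge0 => j _; apply: mulr_ge0; last exact: mul_conjC_ge0.
  by rewrite ler0c; apply: mulr_ge0; [apply: ltW|].
have Sge0 : forall j, 0 <= (q j)%:C * (V j * (V j)^*).
  by move=> j; apply: mulr_ge0; [rewrite ler0c; apply: ltW|exact: mul_conjC_ge0].
have Sne0 : S != 0.
  apply/negP => /eqP /psumr_eq0P H.
  move/negP: vn0; apply; apply/eqP/rowP => j; rewrite mxE.
  have := H (fun i _ => Sge0 i) j isT.
  move/eqP; rewrite mulf_eq0 fmorph_eq0 (gt_eqF (q0 j)) /= mulf_eq0 conjC_eq0 orbb.
  by move/eqP.
have Sgt0 : 0 < S.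
  by rewrite lt_def Sne0 /=; apply: sumr_ge0 => j _; exact: Sge0.
have hl : lambda = T / S by rewrite -E2 mulfK.
rewrite -subr_ge0.
have -> : 1 - lambda = (S - T) / S by rewrite hl; field.
by apply: divr_ge0 => //; apply: ltW.
Qed.

Local Open Scope complex_scope.

Theorem lemma5 (R : realType) (n : nat)
    (p : 'I_n -> R) (d : 'I_n -> 'I_n -> R) (f : R -> R) (s1 s2 : R)
    (qstar : 'I_n -> R) :
  is_prob p -> (forall x, 0 < p x) ->
  (forall x y, 0 <= d x y) -> 0 <= s1 -> 0 <= s2 ->
  convex_pos f -> twice_derivable_pos f -> f 1 = 0 ->
  is_prob qstar -> (forall i, 0 < qstar i) ->
  is_fixed_point_S p d f s1 s2 qstar ->
  achieves_rdp p d f s1 s2 qstar ->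
  forall lambda : R[i],
    eigenvalue (map_mx (fun r : R => r%:C) (Mmat p d f s1 s2 qstar)) lambda ->
    lambda <= 1.
Proof.
move=> _ ppos _ _ _ _ _ _ _ qpos fp _ lambda /eigenvalueP [v ev vn0].
move: fp ev; rewrite /is_fixed_point_S /Mmat.
set A := Afun p d f s1 s2 qstar => fp ev.
set Z := fun x => \sum_k qstar k * A x k.
have Apos x i : 0 < A x i by rewrite /A /Afun expR_gt0.
have Zpos x : 0 < Z x.
  rewrite /Z (bigD1 x) //=.
  have h1 : 0 < qstar x * A x x by apply: mulr_gt0.
  have h2 : 0 <= \sum_(i < n | i != x) qstar i * A x i.
    by apply: sumr_ge0 => i _; apply: mulr_ge0; apply: ltW.
  lra.
pose a := fun x i => A x i / Z x.
apply: (@key R n p qstar a v lambda) => //.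
- by move=> x; apply: ltW.
- by move=> x i; apply: divr_ge0; apply: ltW.
- move=> x; rewrite /a.
  under eq_bigr => j _ do rewrite mulrA.
  by rewrite -mulr_suml -/(Z x) divff // (gt_eqF (Zpos x)).
- move=> j; have := fp j.
  rewrite -{1}(mulr1 (qstar j)) => /(mulfI (negbT (gt_eqF (qpos j)))) ->.
  by apply: eq_bigr => x _; rewrite /a mulrA.
- rewrite -ev; congr (_ *m _); apply/matrixP => i j; rewrite !mxE.
  congr (_%:C); congr (_ * _); apply: eq_bigr => x _.
  have := Zpos x; rewrite /a /Z expr2 => hz.
  by field; rewrite gt_eqF.
Qed.
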